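(* Let $m,n,a,b$ be positive integers with $a<m$, $b<n$, and let $A$ be the $m\times n$ array whose empty cells are exactly those in $I_1\times I_2$, where $I_1=[m-a+1,m]$ and $I_2$ is either $[1,b]$ or $[n-b+1,n]$. If $\gcd(m,n)=a+b$ and $\gcd(a,b)=1$, then the bishop is a solution to $T(A)$.
   Context: Arrays are toroidal (row indices mod $m$, column indices mod $n$); $F(A)$ is the set of filled cells. $s_R(i,j)=(i,j+t)$, $s_C(i,j)=(i+t,j)$ with $t\ge1$ minimal such that the cell is filled. The bishop's move is $s_C\circ s_R$. A move function is a solution to $T(A)$ if it is a permutation of $F(A)$ forming a single cycle of length $|F(A)|$. *)

(* Defs.v *)
(* Cells of the m x n toroidal array are pairs (i,j) of
   naturals with i < m, j < n (0-based: paper's row r is i = r-1). *)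
From mathcomp Require Import all_boot.
Set Implicit Arguments. Unset Strict Implicit. Unset Printing Implicit Defensive.

Definition cell := (nat * nat)%type.

Definition filledA (m n a b : nat) (left : bool) (c : cell) : bool :=
  [&& c.1 < m, c.2 < n &
      ~~ ((m - a <= c.1) && (if left then c.2 < b else n - b <= c.2))].

Definition sR (m n : nat) (F : cell -> bool) (c : cell) : cell :=
  let t := head n [seq t <- iota 1 n | F (c.1, (c.2 + t) %% n)] in
  (c.1, (c.2 + t) %% n).

Definition sC (m n : nat) (F : cell -> bool) (c : cell) : cell :=
  let t := head m [seq t <- iota 1 m | F ((c.1 + t) %% m, c.2)] in
  ((c.1 + t) %% m, c.2).

Definition bishop (m n : nat) (F : cell -> bool) (c : cell) : cell :=
  sC m n F (sR m n F c).

(* f is a solution to T(A): a permutation of F(A) forming a single cycle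
   of length |F(A)| (i.e. F(A) is one orbit of f). *)
Definition is_solution (F : cell -> bool) (f : cell -> cell) : Prop :=
  [/\ forall x, F x -> F (f x),
      forall x y, F x -> F y -> f x = f y -> x = y &
      forall x y, F x -> F y -> exists k, iter k f x = y].

(* Main.v *)
Require Import Defs.
From mathcomp Require Import all_boot zify.

Lemma head_iota (P : pred nat) (d k n t : nat) :
  k <= t < k + n -> P t -> (forall s, k <= s < t -> ~~ P s) ->
  head d [seq x <- iota k n | P x] = t.
Proof.
elim: n k => [|n IH] k Ht Pt Hs; first lia.
rewrite /= ; case: (ltnP k t) => hk.
  have -> : P k = false by apply/negbTE/Hs; lia.
  apply: IH => //; [lia| move=> s hs; apply: Hs; lia].
have -> : t = k by lia.
by have -> : P k = true by have -> : k = t by lia.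
Qed.

Lemma modS1 x n : x < n -> (x + 1) %% n = if x.+1 < n then x.+1 else 0.
Proof.
move=> H2; case: ifP => h; first by rewrite modn_small; lia.
have -> : x + 1 = n by lia. by rewrite modnn.
Qed.

Definition F1 m n a b := filledA m n a b true.

Lemma F1E m n a b i j : F1 m n a b (i, j) = [&& i < m, j < n & ~~ ((m - a <= i) && (j < b))].
Proof. by []. Qed.

Lemma sR_next m n a b c : 0 < n -> F1 m n a b (c.1, (c.2 + 1) %% n) ->
  sR m n (F1 m n a b) c = (c.1, (c.2 + 1) %% n).
Proof.
move=> n0 H; rewrite /sR (@head_iota _ _ 1 n 1) //; lia.
Qed.

Lemma sR_wrap m n a b i : 0 < b < n -> m - a <= i < m ->
  sR m n (F1 m n a b) (i, n.-1) = (i, b).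
Proof.
move=> Hb Hi; rewrite /sR (@head_iota _ _ 1 n b.+1) /=.
- have -> : n.-1 + b.+1 = b + n by lia. by rewrite modnDr modn_small //; lia.
- lia.
- rewrite F1E /=. have -> : n.-1 + b.+1 = b + n by lia. rewrite modnDr modn_small; lia.
- move=> s hs. rewrite F1E /=. have -> : n.-1 + s = s.-1 + n by lia.
  rewrite modnDr modn_small; lia.
Qed.

Lemma sC_next m n a b c : 0 < m -> F1 m n a b ((c.1 + 1) %% m, c.2) ->
  sC m n (F1 m n a b) c = ((c.1 + 1) %% m, c.2).
Proof.
move=> m0 H; rewrite /sC (@head_iota _ _ 1 m 1) //; lia.
Qed.

Lemma sC_skip m n a b j : 0 < a < m -> j < b < n ->
  sC m n (F1 m n a b) ((m - a).-1, j) = (0, j).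
Proof.
move=> Ha Hb; rewrite /sC (@head_iota _ _ 1 m a.+1) /=.
- have -> : (m - a).-1 + a.+1 = m by lia. by rewrite modnn.
- lia.
- rewrite F1E /=. have -> : (m - a).-1 + a.+1 = m by lia. rewrite modnn; lia.
- move=> s hs. rewrite F1E /=. rewrite modn_small; lia.
Qed.

Definition step m n a b (x : cell) : cell :=
  let M := m - a in
  let jn := (x.2 + 1) %% n in
  if x.1.+1 < M then (x.1.+1, jn)
  else if x.1.+1 == M then (if jn < b then (0, jn) else (M, jn))
  else ((x.1 + 1) %% m, if x.2.+1 < n then x.2.+1 else b).

Lemma bishop_step m n a b x : 0 < a < m -> 0 < b < n -> F1 m n a b x ->
  bishop m n (F1 m n a b) x = step m n a b x.
Proof.
case: x => i j Ha Hb; rewrite F1E => /and3P [Hi Hj Hn].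
rewrite /bishop /step /=.
case: ifP => h1.
  rewrite sR_next /=; [| lia| rewrite F1E; lia].
  rewrite sC_next /=; [| lia| rewrite F1E modn_small; lia].
  by rewrite (@modn_small (i+1) m); [rewrite addn1|lia].
case: ifP => h2.
  rewrite sR_next /=; [| lia| rewrite F1E; lia].
  case: ifP => h3.
    have -> : i = (m - a).-1 by lia.
    by rewrite sC_skip //; lia.
  rewrite sC_next /=; [| lia| rewrite F1E; rewrite (@modn_small (i+1) m); lia].
  by rewrite (@modn_small (i+1) m); [rewrite addn1; move/eqP: h2 => ->|lia].
case: ifP => h3.
  rewrite sR_next /=; [| lia| rewrite F1E modn_small; lia].
  rewrite (@modn_small (j+1) n); last lia.
  rewrite sC_next /=; [by rewrite !addn1| lia| rewrite F1E; lia].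
have -> : j = n.-1 by lia.
rewrite sR_wrap; [|lia|lia].
rewrite sC_next //=; try lia; rewrite F1E; lia.
Qed.

Lemma modS1_cases x n : x < n -> ((x+1)%%n = x.+1 /\ x.+1 < n) \/ ((x+1)%%n = 0 /\ x.+1 = n).
Proof. move=> h; rewrite modS1 //; case: ifP => h'; [left|right]; lia. Qed.

Arguments modS1_cases {x n}.
Lemma step_F1 m n a b x : 0 < a < m -> 0 < b < n -> F1 m n a b x -> F1 m n a b (step m n a b x).
Proof.
case: x => i j Ha Hb; rewrite F1E => /and3P [Hi Hj Hn].
rewrite /step /=.
case: (modS1_cases Hj) => [[-> ?]|[-> ?]];
case: (modS1_cases Hi) => [[-> ?]|[-> ?]];
repeat case: ifP => ? ; rewrite F1E; lia.
Qed.

Lemma step_inj m n a b x y : 0 < a < m -> 0 < b < n -> F1 m n a b x -> F1 m n a b y ->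
  step m n a b x = step m n a b y -> x = y.
Proof.
case: x => i j; case: y => i' j' Ha Hb; rewrite !F1E => /and3P [Hi Hj Hn] /and3P [Hi' Hj' Hn'].
rewrite /step /=.
case: (modS1_cases Hj) => [[-> ?]|[-> ?]];
case: (modS1_cases Hi) => [[-> ?]|[-> ?]];
case: (modS1_cases Hj') => [[-> ?]|[-> ?]];
case: (modS1_cases Hi') => [[-> ?]|[-> ?]];
repeat case: ifP => ? ; move=> E; have E1 := congr1 fst E; have E2 := congr1 snd E; simpl in E1, E2; congr pair; lia.
Qed.

Lemma step_row m n a b x : 0 < a < m -> 0 < b < n -> F1 m n a b x ->
  (step m n a b x).1 = 0 \/ ((step m n a b x).1 = x.1.+1 /\ x.1.+1 < m).
Proof.
case: x => i j Ha Hb; rewrite F1E => /and3P [Hi Hj Hn].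
rewrite /step /=.
case: (modS1_cases Hj) => [[-> ?]|[-> ?]];
case: (modS1_cases Hi) => [[-> ?]|[-> ?]];
repeat case: ifP => ? ; rewrite /=; lia.
Qed.

Definition f1 m n a b := bishop m n (F1 m n a b).

Lemma iter_F1 m n a b x k : 0 < a < m -> 0 < b < n -> F1 m n a b x ->
  F1 m n a b (iter k (f1 m n a b) x).
Proof.
move=> Ha Hb Hx; elim: k => [|k IH] //=.
by rewrite /f1 bishop_step // step_F1.
Qed.

Lemma I1 m n a b j k : 0 < a < m -> 0 < b < n -> j < n -> k < m - a ->
  iter k (f1 m n a b) (0, j) = (k, (j + k) %% n).
Proof.
move=> Ha Hb Hj; elim: k => [|k IH] hk /=.
  by rewrite addn0 modn_small.
rewrite IH; last lia.
rewrite /f1 bishop_step //; last by rewrite F1E; lia.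
rewrite /step /=. have -> : k.+1 < m - a by [].
by rewrite modnDml -addnA addn1.
Qed.

Lemma I2 m n a b c s : 0 < a < m -> 0 < b < n -> b <= c < n -> s <= a ->
  iter s (f1 m n a b) (m - a, c) = ((m - a + s) %% m, b + (c - b + s) %% (n - b)).
Proof.
move=> Ha Hb Hc; elim: s => [|s IH] hs /=.
  rewrite addn0 !modn_small //; try lia. congr pair; lia.
rewrite IH; last lia.
rewrite /f1 bishop_step //; last first.
  rewrite F1E. rewrite modn_small; last lia. 
  have : (c - b + s) %% (n - b) < n - b by rewrite ltn_mod; lia.
  lia.
rewrite /step /= modn_small; last lia.
have h1 : (m - a + s).+1 < m - a = false by lia.
have h2 : (m - a + s).+1 == m - a = false by lia.
rewrite h1 h2 addn1 -addnS.
congr pair.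
set x := (c - b + s) %% (n - b).
have hx : x < n - b by rewrite ltn_mod; lia.
have -> : c - b + s.+1 = (c - b + s) + 1 by lia.
rewrite -modnDml -/x.
case: ifP => h.
  rewrite modn_small; lia.
have -> : x + 1 = n - b by lia.
rewrite modnn; lia.
Qed.

Definition Rg a b u := if u < a + b then (u + b) %% (a + b) else u.

Lemma mod_sub x n : n <= x < n + n -> x %% n = x - n.
Proof. move=> h; have -> : x = (x - n) + n by lia. rewrite modnDr modn_small; lia. Qed.

Lemma Rg_arith1 n a b c : 0 < a -> a + b <= n -> c < b -> Rg a b ((c + a) %% n) = c.
Proof.
move=> Ha Hn Hc; rewrite modn_small; last lia.
rewrite /Rg ifT; last lia.
have -> : c + a + b = c + (a + b) by lia.
rewrite modnDr modn_small; lia.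
Qed.

Lemma Rg_arith2 n a b c : 0 < a -> a + b <= n -> b <= c < n ->
  Rg a b ((c + a) %% n) = b + (c - b + a) %% (n - b).
Proof.
move=> Ha Hn Hc; case: (ltnP (c + a) n) => h.
  rewrite !modn_small; try lia. rewrite /Rg ifF; lia.
rewrite !mod_sub; try lia.
rewrite /Rg ifT; last lia.
rewrite modn_small; lia.
Qed.

Lemma G {m n a b j} : 0 < a < m -> 0 < b < n -> a + b <= n -> j < n ->
  exists k, iter k (f1 m n a b) (0, j) = (0, Rg a b ((j + m) %% n)).
Proof.
move=> Ha Hb Hn Hj.
have e1 : iter (m - a) (f1 m n a b) (0, j) =
   let c := (j + (m - a)) %% n in if c < b then (0, c) else (m - a, c).
  have hM : (m - a).-1.+1 = m - a by lia.
  rewrite -{1}hM iterS I1 //; last lia.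
  rewrite /f1 bishop_step //; last first.
    rewrite F1E. have : (j + (m - a).-1) %% n < n by rewrite ltn_mod; lia. lia.
  by rewrite /step /= hM ltnn eqxx modnDml -addnA addn1 hM.
have ec : (j + m) %% n = ((j + (m - a)) %% n + a) %% n.
  by rewrite modnDml -addnA subnK //; lia.
rewrite ec.
set c := (j + (m - a)) %% n in e1 *.
have hc : c < n by rewrite ltn_mod; lia.
case: (ltnP c b) => h.
  exists (m - a); rewrite e1 /= h Rg_arith1 //; lia.
exists (a + (m - a)); rewrite iterD e1 /= ifF; last lia.
rewrite I2 //; try lia.
rewrite subnK; last lia. rewrite modnn Rg_arith2 //; lia.
Qed.

Definition reach (f : cell -> cell) x y := exists k, iter k f x = y.

Lemma reach_trans f x y z : reach f x y -> reach f y z -> reach f x z.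
Proof. move=> [k1 <-] [k2 <-]; exists (k2 + k1); by rewrite iterD. Qed.
Arguments reach_trans {f x y z}.

Lemma reach_refl f x : reach f x x.
Proof. by exists 0. Qed.

Lemma KA m' n' d r k : 0 < d -> coprime m' n' -> r < d -> 0 < k < n' ->
  d <= (r + k * (m' * d)) %% (n' * d).
Proof.
move=> d0 cop hr hk; rewrite leqNgt; apply/negP => hu.
set u := (r + k * (m' * d)) %% (n' * d) in hu.
have e1 : u %% d = r.
  rewrite /u modn_dvdm; last by apply: dvdn_mull.
  by rewrite mulnA addnC modnMDl modn_small.
have e2 : u = r by rewrite -e1 modn_small.
have : (r + k * (m' * d) == r + 0 %[mod n' * d]).
  rewrite addn0 -/u e2 modn_small //; nia.
rewrite eqn_modDl mod0n -/(dvdn _ _) mulnA dvdn_pmul2r // Gauss_dvdl; last by rewrite coprime_sym.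
move/dvdn_leq; lia.
Qed.

Lemma L3a m n a b m' n' r k : 0 < a < m -> 0 < b < n -> a + b <= n ->
  m = m' * (a + b) -> n = n' * (a + b) -> coprime m' n' -> r < a + b -> k < n' ->
  reach (f1 m n a b) (0, r) (0, (r + k * m) %% n).
Proof.
move=> Ha Hb Hab hm hn cop hr; elim: k => [|k IH] hk.
  rewrite mul0n addn0 modn_small; [exact: reach_refl| lia].
apply: (reach_trans (IH _)); first lia.
have hu : (r + k * m) %% n < n by rewrite ltn_mod; lia.
have [k' hk'] := G Ha Hb Hab hu; exists k'; rewrite hk'.
rewrite modnDml -addnA -mulSnr.
congr (_, _); rewrite /Rg ifF //.
apply/negbTE; rewrite -leqNgt.
rewrite [in X in X %% _]hm [in X in _ %% X]hn; apply: KA => //; lia.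
Qed.

Arguments L3a {m n a b m' n' r k}.

Lemma L3b m n a b m' n' r : 0 < a < m -> 0 < b < n -> a + b <= n ->
  m = m' * (a + b) -> n = n' * (a + b) -> coprime m' n' -> r < a + b ->
  reach (f1 m n a b) (0, r) (0, (r + b) %% (a + b)).
Proof.
move=> Ha Hb Hab hm hn cop hr.
have n'0 : 0 < n' by nia.
apply: (reach_trans (L3a Ha Hb Hab hm hn cop hr (_ : n'.-1 < n'))); first lia.
have hu : (r + n'.-1 * m) %% n < n by rewrite ltn_mod; lia.
have [k' hk'] := G Ha Hb Hab hu; exists k'; rewrite hk'.
rewrite modnDml -addnA -mulSnr prednK //.
have -> : n' * m = m' * n by rewrite hm hn; nia.
rewrite addnC modnMDl modn_small; last lia.
by rewrite /Rg ifT.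
Qed.

Arguments L3b {m n a b m' n' r}.

Lemma L3c m n a b m' n' k : 0 < a < m -> 0 < b < n -> a + b <= n ->
  m = m' * (a + b) -> n = n' * (a + b) -> coprime m' n' ->
  reach (f1 m n a b) (0, 0) (0, (k * b) %% (a + b)).
Proof.
move=> Ha Hb Hab hm hn cop; elim: k => [|k IH].
  by rewrite mul0n mod0n; exact: reach_refl.
apply: (reach_trans IH).
have hr : (k * b) %% (a + b) < a + b by rewrite ltn_mod; lia.
apply: (reach_trans (L3b Ha Hb Hab hm hn cop hr)).
by rewrite modnDml -mulSnr; exact: reach_refl.
Qed.

Lemma inv_mod p q : 0 < p -> coprime p q -> exists u, (u * p) %% q = 1 %% q.
Proof.
move=> p0 cop; case: (egcdnP q p0) => km kn E _.
exists km; rewrite E (eqP cop) modnMDl //.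
Qed.

Lemma L3d a b r : 0 < b -> coprime a b -> r < a + b -> exists k, (k * b) %% (a + b) = r.
Proof.
move=> b0 cop hr.
have cop' : coprime b (a + b) by rewrite /coprime gcdnDr gcdnC.
have [u hu] := inv_mod b (a + b) b0 cop'.
exists (r * u); rewrite -mulnA -modnMmr hu modnMmr muln1 modn_small //.
Qed.

Lemma L3e m n d m' n' j : 0 < d -> 0 < m' -> m = m' * d -> n = n' * d -> coprime m' n' -> j < n ->
  exists2 k, k < n' & (j %% d + k * m) %% n = j.
Proof.
move=> d0 m0 hm hn cop hj.
have [u hu] := inv_mod m' n' m0 cop.
have n'0 : 0 < n' by nia.
set q := j %/ d.
have hq : q < n' by rewrite /q ltn_divLR // -hn.
exists ((u * q) %% n'); first by rewrite ltn_mod.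
have e1 : ((u * q) %% n' * m') %% n' = q.
  rewrite modnMml mulnAC mulnC -modnMmr hu modnMmr muln1 modn_small //.
have e2 : ((u * q) %% n' * m) %% n = q * d.
  by rewrite hm hn mulnA -muln_modl e1.
rewrite -modnDmr e2 addnC /q -divn_eq modn_small //.
Qed.

Lemma iterF (F : cell -> bool) f x k : (forall x, F x -> F (f x)) -> F x -> F (iter k f x).
Proof. by move=> cl Fx; elim: k => //= k IH; apply: cl. Qed.

Arguments iterF {F f x k}.

Lemma iter_inj (F : cell -> bool) f k y z : (forall x, F x -> F (f x)) ->
  (forall x y, F x -> F y -> f x = f y -> x = y) -> F y -> F z ->
  iter k f y = iter k f z -> y = z.
Proof.
move=> cl inj Fy Fz; elim: k => //= k IH E; apply: IH.
by apply: inj E; apply: iterF.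
Qed.

Arguments iter_inj {F f k y z}.

Lemma cyc (F : cell -> bool) f m n x : (forall x, F x -> x.1 < m /\ x.2 < n) ->
  (forall x, F x -> F (f x)) ->
  (forall x y, F x -> F y -> f x = f y -> x = y) -> F x ->
  exists2 p, 0 < p & iter p f x = x.
Proof.
move=> box cl inj Fx.
pose s := [seq iter i f x | i <- iota 0 (m * n).+1].
pose B := [seq (i, j) | i <- iota 0 m, j <- iota 0 n].
have sub : {subset s <= B}.
  move=> z /mapP [k _ ->]; apply/allpairsP.
  have [h1 h2] := box _ (iterF (k:=k) cl Fx).
  exists (iter k f x); rewrite !mem_iota; split; [by rewrite add0n h1 | by rewrite add0n h2 | by case: (iter k f x)].
have : ~~ uniq s.
  apply/negP => u; have := uniq_leq_size u sub.
  by rewrite size_map size_iota size_allpairs !size_iota ltnn.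
case/(uniqPn x) => i [j [hij hj]].
rewrite size_map size_iota in hj.
rewrite !(nth_map 0) ?size_iota ?nth_iota; try lia.
rewrite !add0n => E.
exists (j - i); first lia.
apply: (iter_inj (k := i) cl inj); [exact: iterF | done |].
by rewrite -iterD subnKC ?E //; lia.
Qed.

Arguments cyc {F f m n x}.

Lemma reach_sym (F : cell -> bool) f m n x y : (forall x, F x -> x.1 < m /\ x.2 < n) ->
  (forall x, F x -> F (f x)) ->
  (forall x y, F x -> F y -> f x = f y -> x = y) -> F x ->
  reach f x y -> reach f y x.
Proof.
move=> box cl inj Fx [k <-].
have [p p0 hp] := cyc box cl inj Fx.
have hkp : forall l, iter (l * p) f x = x.
  by elim=> [|l IH] //=; rewrite mulSn iterD IH hp.
exists (k * p.-1); rewrite -iterD.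
have -> : k * p.-1 + k = k * p by rewrite addnC -mulnS prednK.
by rewrite hkp.
Qed.

Lemma F1box m n a b x : F1 m n a b x -> x.1 < m /\ x.2 < n.
Proof. by case: x => i j; rewrite F1E => /and3P [? ? _]. Qed.

Arguments F1box {m n a b x}.
Arguments step_row {m n a b x}.

Lemma f1_cl m n a b x : 0 < a < m -> 0 < b < n -> F1 m n a b x -> F1 m n a b (f1 m n a b x).
Proof. by move=> Ha Hb Fx; rewrite /f1 bishop_step // step_F1. Qed.

Arguments f1_cl {m n a b x}.

Lemma f1_inj m n a b x y : 0 < a < m -> 0 < b < n -> F1 m n a b x -> F1 m n a b y ->
  f1 m n a b x = f1 m n a b y -> x = y.
Proof. by move=> Ha Hb Fx Fy; rewrite /f1 !bishop_step //; apply: step_inj. Qed.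

Arguments f1_inj {m n a b x y}.

Lemma to_row0 m n a b x : 0 < a < m -> 0 < b < n -> F1 m n a b x ->
  exists2 j, j < n & reach (f1 m n a b) x (0, j).
Proof.
move=> Ha Hb.
suff: forall t x, m - x.1 <= t -> F1 m n a b x -> exists2 j, j < n & reach (f1 m n a b) x (0, j).
  by move=> H Fx; apply: (H (m - x.1)).
elim=> [|t IH] {}x ht Fx; have [h1 h2] := F1box Fx.
  lia.
case: (posnP x.1) => h0.
  exists x.2; first done. exists 0 => /=; move: h0; by case: x {ht Fx h1 h2} => i j /= ->.
have Fy := f1_cl Ha Hb Fx.
have e : step m n a b x = f1 m n a b x by rewrite /f1 bishop_step.
have [hy|[hy hm]] := step_row Ha Hb Fx; rewrite e in hy.
  exists (f1 m n a b x).2; first by case: (F1box Fy).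
  exists 1; change (f1 m n a b x = (0, (f1 m n a b x).2)); move: hy; by case: (f1 m n a b x) => i j /= ->.
have [j hj hr] := IH (f1 m n a b x) (ltac:(lia)) Fy.
exists j => //; apply: reach_trans hr; by exists 1.
Qed.

Arguments to_row0 {m n a b x}.

Arguments L3c {m n a b m' n' k}.
Arguments L3d {a b r}.
Arguments L3e {m n d m' n' j}.

Arguments reach_sym {F f m n x y}.

Lemma main_true m n a b : 0 < a < m -> 0 < b < n ->
  gcdn m n = a + b -> gcdn a b = 1 ->
  is_solution (F1 m n a b) (f1 m n a b).
Proof.
move=> Ha Hb hg hab.
set d := a + b.
have d0 : 0 < d by lia.
have dm : d %| m by rewrite /d -hg dvdn_gcdl.
have dn : d %| n by rewrite /d -hg dvdn_gcdr.
have hm : m = (m %/ d) * d by rewrite divnK.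
have hn : n = (n %/ d) * d by rewrite divnK.
set m' := m %/ d in hm; set n' := n %/ d in hn.
have Hab : a + b <= n by apply: dvdn_leq => //; lia.
have m0 : 0 < m' by nia.
have cop : coprime m' n'.
  apply/eqP; apply/eqP; rewrite -(eqn_pmul2r d0) mul1n muln_gcdl -hm -hn hg //.
have copab : coprime a b by apply/eqP.
have row0 : forall j, j < n -> reach (f1 m n a b) (0, 0) (0, j).
  move=> j hj.
  have [k hk e] := L3e d0 m0 hm hn cop hj.
  have hr : j %% d < d by rewrite ltn_mod.
  have [k0 e0] := L3d (ltac:(lia) : 0 < b) copab hr.
  have := L3c Ha Hb Hab hm hn cop (k := k0); rewrite e0 => r1.
  apply: reach_trans r1 _; have := (L3a Ha Hb Hab hm hn cop hr hk); by rewrite e.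
have F00 : F1 m n a b (0, 0) by rewrite F1E; lia.
split.
- by move=> x; apply: f1_cl.
- by move=> x y; apply: f1_inj.
- move=> x y Fx Fy.
  have [j1 hj1 r1] := to_row0 Ha Hb Fx.
  have [j2 hj2 r2] := to_row0 Ha Hb Fy.
  have box : forall x, F1 m n a b x -> x.1 < m /\ x.2 < n by move=> ?; apply: F1box.
  have cl : forall x, F1 m n a b x -> F1 m n a b (f1 m n a b x) by move=> ?; apply: f1_cl.
  have inj : forall x y, F1 m n a b x -> F1 m n a b y -> f1 m n a b x = f1 m n a b y -> x = y.
    by move=> ? ?; apply: f1_inj.
  have r1' : reach (f1 m n a b) (0, j1) (0, 0).
    exact: (reach_sym box cl inj F00 (row0 _ hj1)).
  have r2' : reach (f1 m n a b) (0, j2) y.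
    exact: (reach_sym box cl inj Fy r2).
  apply: reach_trans r1 _; apply: reach_trans r1' _; apply: reach_trans (row0 _ hj2) _; exact: r2'.
Qed.

Definition F0 m n a b := filledA m n a b false.
Definition tau n b (x : cell) : cell := (x.1, (x.2 + b) %% n).

Lemma F0_tau m n a b x : 0 < b < n -> F0 m n a b x = (x.2 < n) && F1 m n a b (tau n b x).
Proof.
case: x => i j Hb; rewrite /F0 /filledA /tau /= F1E.
case: (ltnP j n) => hj /=; last by rewrite andbF.
have hm : (j + b) %% n < n by rewrite ltn_mod; lia.
rewrite hm.
case: (ltnP (j + b) n) => h.
  rewrite modn_small //.
  lia.
rewrite mod_sub; last lia.
lia.
Qed.

Lemma sR_tau m n a b c : 0 < b < n ->
  tau n b (sR m n (F0 m n a b) c) = sR m n (F1 m n a b) (tau n b c).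
Proof.
move=> Hb; rewrite /sR /tau /=.
have E : [seq t <- iota 1 n | F0 m n a b (c.1, (c.2 + t) %% n)] =
         [seq t <- iota 1 n | F1 m n a b (c.1, ((c.2 + b) %% n + t) %% n)].
  apply: eq_filter => t; rewrite F0_tau // /tau /=.
  rewrite ltn_mod (_ : 0 < n) /=; last lia.
  by rewrite !modnDml addnAC.
rewrite E; congr pair.
by rewrite !modnDml addnAC.
Qed.

Lemma sC_tau m n a b c : 0 < b < n -> c.2 < n ->
  tau n b (sC m n (F0 m n a b) c) = sC m n (F1 m n a b) (tau n b c).
Proof.
move=> Hb hc; rewrite /sC /tau /=.
have E : [seq t <- iota 1 m | F0 m n a b ((c.1 + t) %% m, c.2)] =
         [seq t <- iota 1 m | F1 m n a b ((c.1 + t) %% m, (c.2 + b) %% n)].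
  by apply: eq_filter => t; rewrite F0_tau // /tau /= hc.
by rewrite E.
Qed.

Lemma bishop_tau m n a b x : 0 < b < n ->
  tau n b (bishop m n (F0 m n a b) x) = bishop m n (F1 m n a b) (tau n b x).
Proof.
move=> Hb; rewrite /bishop sC_tau //; first by rewrite sR_tau.
rewrite /sR /= ltn_mod; lia.
Qed.

Lemma bishop0_col m n a b x : 0 < n -> (bishop m n (F0 m n a b) x).2 < n.
Proof. move=> n0; rewrite /bishop /sC /sR /= ltn_mod; lia. Qed.

Lemma tau_inj n b x y : x.2 < n -> y.2 < n -> tau n b x = tau n b y -> x = y.
Proof.
case: x => i j; case: y => i' j' /= hj hj' E.
have E1 := congr1 fst E; have E2 := congr1 snd E; rewrite /= in E1 E2.
have : (j + b == j' + b %[mod n]) by rewrite E2.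
rewrite eqn_modDr !modn_small // => /eqP ->; by rewrite E1.
Qed.

Arguments tau_inj {n b x y}.

Lemma iter_tau m n a b x k : 0 < b < n ->
  tau n b (iter k (bishop m n (F0 m n a b)) x) = iter k (bishop m n (F1 m n a b)) (tau n b x).
Proof. move=> Hb; elim: k => //= k IH; by rewrite bishop_tau // IH. Qed.

Arguments main_true {m n a b}.

Lemma main_false {m n a b} : 0 < a < m -> 0 < b < n ->
  gcdn m n = a + b -> gcdn a b = 1 ->
  is_solution (F0 m n a b) (bishop m n (F0 m n a b)).
Proof.
move=> Ha Hb hg hab.
have [cl inj tr] := main_true Ha Hb hg hab.
have n0 : 0 < n by lia.
split.
- move=> x; rewrite !F0_tau // => /andP [_ Fx].
  rewrite bishop0_col //= bishop_tau //; exact: cl.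
- move=> x y; rewrite !F0_tau // => /andP [hx Fx] /andP [hy Fy] E.
  apply: (tau_inj hx hy); apply: (inj _ _ Fx Fy).
  by rewrite /f1 -!bishop_tau // E.
- move=> x y; rewrite !F0_tau // => /andP [hx Fx] /andP [hy Fy].
  have [k hk] := tr _ _ Fx Fy.
  exists k; apply: (@tau_inj n b); last by rewrite iter_tau.
  + by case: k {hk} => [|k] //=; rewrite bishop0_col.
  + done.
Qed.

Theorem lemma4p12 (m n a b : nat) (left : bool) :
  0 < a < m -> 0 < b < n ->
  gcdn m n = a + b -> gcdn a b = 1 ->
  is_solution (filledA m n a b left) (bishop m n (filledA m n a b left)).
Proof.
case: left => Ha Hb hg hab.
- exact: (main_true Ha Hb hg hab).
- exact: (main_false Ha Hb hg hab).
Qed.
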